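(* For all $k,l,m,n,u,v\in\mathbb N$ and all closed terms $P:(k,l)$, $Q:(l,m)$, $R:(m,n)$, $S:(n,u)$, $T:(u,v)$: (i) $(P\mathrel{;}Q)\mathrel{;}R\sim P\mathrel{;}(Q\mathrel{;}R)$; (ii) $P\mathrel{;}\mathsf I_l\sim P\sim \mathsf I_k\mathrel{;}P$; (iii) $(P\otimes R)\otimes T\sim P\otimes(R\otimes T)$; (iv) $(P\otimes S)\mathrel{;}(Q\otimes T)\sim (P\mathrel{;}Q)\otimes(S\mathrel{;}T)$; (v) $(P\otimes R)\mathrel{;}\mathsf X_{l,n}\sim \mathsf X_{k,m}\mathrel{;}(R\otimes P)$; (vi) $\mathsf X_{k,l}\mathrel{;}\mathsf X_{l,k}\sim\mathsf I_{k+l}$. (Each equation is asserted whenever both sides are well-sorted terms.)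
   Context: Wire calculus. Fix a set $\Sigma$ of signals and $\iota\notin\Sigma$; $L=\Sigma\cup\{\iota\}$; $\vec\iota$ denotes a word of $\iota$'s. Prefix strings are words over atoms: signal variables $x$, binders $\lambda x$, $\iota$, constants $\sigma\in\Sigma$. Terms: $P::= Y \mid P\mathrel{;}P\mid P\otimes P\mid \frac{u}{v}.P\mid P+P\mid \mu Y{:}\tau.P$ ($Y$ process variables, $\tau$ a sort $(k,l)$). In $\frac{u}{v}.P$, variables $x$ with $\lambda x$ in $uv$ are bound (set $bd$). Sorting: $Y$ has its declared sort; $P:(k,n),R:(n,l)\Rightarrow P\mathrel{;}R:(k,l)$; $P:(k,l),Q:(m,n)\Rightarrow P\otimes Q:(k+m,l+n)$; $\mu Y{:}\tau'.P:\tau$ if $P:\tau$ assuming $Y{:}\tau'$; $\frac{u}{v}.P:(k,l)$ if $|u|=k,|v|=l$, free variables of $uv$ are in context and disjoint from $bd$, and $P:(k,l)$ with $bd$ added to the context; $P,Q:\tau\Rightarrow P+Q:\tau$. Closed terms only, up to renaming of bound variables; $\otimes$ binds tighter than $;$. Transitions $P\xrightarrow[\vec b]{\vec a}Q$ are generated by: (Refl) $P\xrightarrow[\vec\iota]{\vec\iota}P$; ($\iota$L) $P\xrightarrow[\vec\iota]{\vec\iota}R\xrightarrow[\vec b]{\vec a}Q$ gives $P\xrightarrow[\vec b]{\vec a}Q$; ($\iota$R) $P\xrightarrow[\vec b]{\vec a}R\xrightarrow[\vec\iota]{\vec\iota}Q$ gives $P\xrightarrow[\vec b]{\vec a}Q$;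 (Cut) $P\xrightarrow[\vec c]{\vec a}Q$, $R\xrightarrow[\vec b]{\vec c}S$ give $P\mathrel{;}R\xrightarrow[\vec b]{\vec a}Q\mathrel{;}S$; (Ten) $P\xrightarrow[\vec b]{\vec a}Q$, $R\xrightarrow[\vec d]{\vec c}S$ give $P\otimes R\xrightarrow[\vec b\vec d]{\vec a\vec c}Q\otimes S$; (Pref) for each $\sigma:bd\to L$, $\frac{u}{v}.P\xrightarrow[v|_\sigma]{u|_\sigma}P|_\sigma$ ($\lambda x\mapsto\sigma(x)$ in labels, $x\mapsto\sigma(x)$ in $P$); (Rec) $P[\mu Y.P/Y]\xrightarrow[\vec b]{\vec a}Q$ gives $\mu Y.P\xrightarrow[\vec b]{\vec a}Q$; ($+\iota$) $P\xrightarrow[\vec\iota]{\vec\iota}Q$, $R\xrightarrow[\vec\iota]{\vec\iota}S$ give $P+R\xrightarrow[\vec\iota]{\vec\iota}Q+S$; ($+$L/R) $P\xrightarrow[\vec b]{\vec a}Q$ with $\vec a\vec b$ not all $\iota$ gives $P+R\xrightarrow[\vec b]{\vec a}Q$ and $R+P\xrightarrow[\vec b]{\vec a}Q$. Bisimilarity $\sim$: $P\sim Q$ (same sort) iff some relation $S\ni(P,Q)$ satisfies: if $(P',Q')\in S$ and $P'\xrightarrow[\vec b]{\vec a}P''$ then $Q'\xrightarrow[\vec b]{\vec a}Q''$ for some $Q''$ with $(P'',Q'')\in S$, and symmetrically. Constants: $\mathsf I_k=\mu Y.\frac{\lambda x_1\cdots\lambda x_k}{\lambda x_1\cdots\lambda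 x_k}.Y:(k,k)$ and $\mathsf X_{k,l}=\mu Y.\frac{\lambda x_1\cdots\lambda x_k\lambda y_1\cdots\lambda y_l}{\lambda y_1\cdots\lambda y_l\lambda x_1\cdots\lambda x_k}.Y:(k+l,l+k)$. *)

(* Defs.v *)
From mathcomp Require Import all_boot.
Set Implicit Arguments.
Unset Strict Implicit.
Unset Printing Implicit Defensive.

Section Wire.
Variable Sigma : Type.

(* Labels L = Sigma + {iota}; iota is represented by None. *)
Definition label := option Sigma.
Definition iota_l : label := None.
Definition all_iota (w : seq label) : bool := all (fun o => ~~ isSome o) w.

Inductive atom :=
| AVar of nat
| ABind of nat
| AIota
| AConst of Sigma.

Inductive term :=
| PV of nat
| Seq of term & term
| Ten of term & term
| Pref of seq atom & seq atom & term
| Plus of term & term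
| Mu of nat & (nat * nat) & term.

Definition binders (w : seq atom) : seq nat :=
  pmap (fun a => if a is ABind x then Some x else None) w.
Definition vars (w : seq atom) : seq nat :=
  pmap (fun a => if a is AVar x then Some x else None) w.

Definition pctx := nat -> option (nat * nat).
Definition pupd (G : pctx) (Y : nat) (t : nat * nat) : pctx :=
  fun Z => if Z == Y then Some t else G Z.
Definition pempty : pctx := fun _ => None.

Inductive has_sort : pctx -> seq nat -> term -> nat * nat -> Prop :=
| srt_var G D Y t : G Y = Some t -> has_sort G D (PV Y) t
| srt_seq G D P R k n l :
    has_sort G D P (k, n) -> has_sort G D R (n, l) -> has_sort G D (Seq P R) (k, l)
| srt_ten G D P Q k l m n :
    has_sort G D P (k, l) -> has_sort G D Q (m, n) ->
    has_sort G D (Ten P Q) (k + m, l + n)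
| srt_mu G D Y P t :
    has_sort (pupd G Y t) D P t -> has_sort G D (Mu Y t P) t
| srt_pref G D u v P k l :
    size u = k -> size v = l ->
    {subset vars (u ++ v) <= D} ->
    all (fun x => x \notin binders (u ++ v)) (vars (u ++ v)) ->
    has_sort G (binders (u ++ v) ++ D) P (k, l) ->
    has_sort G D (Pref u v P) (k, l)
| srt_plus G D P Q t :
    has_sort G D P t -> has_sort G D Q t -> has_sort G D (Plus P Q) t.

Definition closed_sort (P : term) (t : nat * nat) := has_sort pempty [::] P t.

Fixpoint substP (Y : nat) (N : term) (P : term) : term :=
  match P with
  | PV Z => if Z == Y then N else PV Z
  | Seq P1 P2 => Seq (substP Y N P1) (substP Y N P2)
  | Ten P1 P2 => Ten (substP Y N P1) (substP Y N P2)
  | Pref u v P1 => Pref u v (substP Y N P1)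
  | Plus P1 P2 => Plus (substP Y N P1) (substP Y N P2)
  | Mu Z t P1 => if Z == Y then Mu Z t P1 else Mu Z t (substP Y N P1)
  end.

Definition atom_of_label (o : label) : atom :=
  if o is Some s then AConst s else AIota.

Definition substA (f : nat -> option label) (a : atom) : atom :=
  match a with
  | AVar x => if f x is Some o then atom_of_label o else AVar x
  | _ => a
  end.

Definition restrict (bd : seq nat) (f : nat -> option label) : nat -> option label :=
  fun x => if x \in bd then None else f x.

Fixpoint substS (f : nat -> option label) (P : term) : term :=
  match P with
  | PV Z => PV Z
  | Seq P1 P2 => Seq (substS f P1) (substS f P2)
  | Ten P1 P2 => Ten (substS f P1) (substS f P2)
  | Pref u v P1 =>
      let g := restrict (binders (u ++ v)) f in
      Pref (map (substA f) u) (map (substA f) v) (substS g P1)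
  | Plus P1 P2 => Plus (substS f P1) (substS f P2)
  | Mu Z t P1 => Mu Z t (substS f P1)
  end.

Definition labA (sg : nat -> label) (a : atom) : label :=
  match a with
  | AVar x => sg x
  | ABind x => sg x
  | AIota => None
  | AConst s => Some s
  end.

Definition sgsub (bd : seq nat) (sg : nat -> label) : nat -> option label :=
  fun x => if x \in bd then Some (sg x) else None.

(* step P a b Q  :  P --a/b--> Q  (a: left boundary, b: right boundary). *)
Inductive step : term -> seq label -> seq label -> term -> Prop :=
| st_refl P k l :
    closed_sort P (k, l) -> step P (nseq k iota_l) (nseq l iota_l) P
| st_iotaL P R Q a0 b0 a b :
    all_iota a0 -> all_iota b0 ->
    step P a0 b0 R -> step R a b Q -> step P a b Q
| st_iotaR P R Q a0 b0 a b :
    all_iota a0 -> all_iota b0 ->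
    step P a b R -> step R a0 b0 Q -> step P a b Q
| st_cut P Q R S a b c :
    step P a c Q -> step R c b S -> step (Seq P R) a b (Seq Q S)
| st_ten P Q R S a b c d :
    step P a b Q -> step R c d S -> step (Ten P R) (a ++ c) (b ++ d) (Ten Q S)
| st_pref u v P (sg : nat -> label) :
    step (Pref u v P) (map (labA sg) u) (map (labA sg) v)
         (substS (sgsub (binders (u ++ v)) sg) P)
| st_rec Y t P a b Q :
    step (substP Y (Mu Y t P) P) a b Q -> step (Mu Y t P) a b Q
| st_plusI P Q R S a b :
    all_iota a -> all_iota b ->
    step P a b Q -> step R a b S -> step (Plus P R) a b (Plus Q S)
| st_plusL P R Q a b :
    ~~ all_iota (a ++ b) -> step P a b Q -> step (Plus P R) a b Q
| st_plusR P R Q a b :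
    ~~ all_iota (a ++ b) -> step P a b Q -> step (Plus R P) a b Q.

Definition bisimulation (Rel : term -> term -> Prop) : Prop :=
  forall P Q, Rel P Q ->
    (forall a b P', step P a b P' -> exists2 Q', step Q a b Q' & Rel P' Q') /\
    (forall a b Q', step Q a b Q' -> exists2 P', step P a b P' & Rel P' Q').

Definition bisim (P Q : term) : Prop :=
  (exists t, closed_sort P t /\ closed_sort Q t) /\
  exists Rel, bisimulation Rel /\ Rel P Q.

(* Constants I_k and X_{k,l}: x_i is named i, y_j is named k + j, Y is 0. *)
Definition Id_k (k : nat) : term :=
  Mu 0 (k, k) (Pref (map ABind (iota 0 k)) (map ABind (iota 0 k)) (PV 0)).

Definition Sw (k l : nat) : term :=
  Mu 0 (k + l, l + k)
     (Pref (map ABind (iota 0 k ++ iota k l)) (map ABind (iota k l ++ iota 0 k))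
           (PV 0)).

End Wire.

Arguments PV {Sigma}.
Arguments AIota {Sigma}.
Arguments Id_k {Sigma}.
Arguments Sw {Sigma}.

(* Main.v *)
Require Import Defs.
From mathcomp Require Import all_boot.
Set Implicit Arguments.
Unset Strict Implicit.
Unset Printing Implicit Defensive.

Lemma sort_seq_inv {Sigma} G D (P R : term Sigma) t :
  has_sort G D (Seq P R) t -> exists n, has_sort G D P (t.1, n) /\ has_sort G D R (n, t.2).
Proof. by move=> H; inversion H; subst; exists n. Qed.

Lemma sort_ten_inv {Sigma} G D (P R : term Sigma) t :
  has_sort G D (Ten P R) t -> exists k l m n, t = (k + m, l + n) /\
     has_sort G D P (k, l) /\ has_sort G D R (m, n).
Proof. by move=> H; inversion H; subst; exists k, l, m, n. Qed.

Lemma sort_mu_inv {Sigma} G D Y t' (P : term Sigma) t :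
  has_sort G D (Mu Y t' P) t -> t = t' /\ has_sort (pupd G Y t) D P t.
Proof. by move=> H; inversion H; subst. Qed.

Lemma sort_plus_inv {Sigma} G D (P R : term Sigma) t :
  has_sort G D (Plus P R) t -> has_sort G D P t /\ has_sort G D R t.
Proof. by move=> H; inversion H; subst. Qed.

Lemma sort_pref_inv {Sigma} G D u v (P : term Sigma) t :
  has_sort G D (Pref u v P) t -> t = (size u, size v) /\
    has_sort G (binders (u ++ v) ++ D) P t.
Proof. by move=> H; inversion H; subst. Qed.

Lemma sortU {Sigma} G D (P : term Sigma) t1 :
  has_sort G D P t1 -> forall D' t2, has_sort G D' P t2 -> t1 = t2.
Proof.
elim=> {G D P t1}.
- by move=> G D Y t HG D' t2 H; inversion H; subst; congruence.
- move=> G D P R k n l _ IHP _ IHR D' t2 /sort_seq_inv [n' [H1 H2]].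
  case: t2 H1 H2 => k2 l2 /= H1 H2.
  by case: (IHP _ _ H1) => ??; case: (IHR _ _ H2) => ??; subst.
- move=> G D P Q k l m n _ IHP _ IHQ D' t2 /sort_ten_inv [k' [l' [m' [n' [-> [H1 H2]]]]]].
  by case: (IHP _ _ H1) => ??; case: (IHQ _ _ H2) => ??; subst.
- by move=> G D Y P t _ _ D' t2 /sort_mu_inv [->].
- by move=> G D u v P k l <- <- _ _ _ _ D' t2 /sort_pref_inv [->].
- by move=> G D P Q t _ IH _ _ D' t2 /sort_plus_inv [H _]; apply: IH H.
Qed.

Lemma sort_weaken {Sigma} G D (P : term Sigma) t :
  has_sort G D P t -> forall G' D', (forall Y s, G Y = Some s -> G' Y = Some s) ->
  {subset D <= D'} -> has_sort G' D' P t.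
Proof.
elim=> {G D P t}.
- by move=> G D Y t HG G' D' HGG _; constructor; apply: HGG.
- by move=> G D P R k n l _ IHP _ IHR G' D' H1 H2; apply: srt_seq; [apply: IHP|apply: IHR].
- by move=> G D P Q k l m n _ IHP _ IHQ G' D' H1 H2; apply: srt_ten; [apply: IHP|apply: IHQ].
- move=> G D Y P t _ IH G' D' H1 H2; apply: srt_mu; apply: IH => //.
  by move=> Z s; rewrite /pupd; case: (Z == Y) => //; apply: H1.
- move=> G D u v P k l Hu Hv Hs Ha _ IH G' D' H1 H2; apply: srt_pref => //.
  + by move=> x /Hs /H2.
  + apply: IH => // x; rewrite !mem_cat; case/orP=> [->//|/H2->]; by rewrite orbT.
- by move=> G D P Q t _ IHP _ IHQ G' D' H1 H2; apply: srt_plus; [apply: IHP|apply: IHQ].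
Qed.

Lemma sort_substP {Sigma} Y (N : term Sigma) tN : has_sort pempty [::] N tN ->
  forall G D P t, has_sort G D P t -> forall G0,
  (forall Z s, G Z = Some s -> if Z == Y then s = tN else G0 Z = Some s) ->
  has_sort G0 D (substP Y N P) t.
Proof.
move=> HN G D P t; elim=> {G D P t}.
- move=> G D Z t HG G0 H /=; have := H _ _ HG; case: (Z == Y).
  + by move=> ->; apply: (sort_weaken HN) => //.
  + by move=> ?; constructor.
- by move=> G D P R k n l _ IHP _ IHR G0 H /=; apply: srt_seq; [apply: IHP|apply: IHR].
- by move=> G D P Q k l m n _ IHP _ IHQ G0 H /=; apply: srt_ten; [apply: IHP|apply: IHQ].
- move=> G D Z P t HP IH G0 H /=; case: (eqVneq Z Y) => [?|ne].
  + subst Z; apply: srt_mu; apply: (sort_weaken HP) => // W s; rewrite /pupd.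
    case: (eqVneq W Y) => [//|ne HW]; by have := H _ _ HW; rewrite (negbTE ne).
  + rewrite ?(negbTE ne); apply: srt_mu; apply: IH => W s; rewrite /pupd.
    case: (eqVneq W Z) => [-> [<-]|neW HW].
    * by rewrite (negbTE ne).
    * have := H _ _ HW; case: (W == Y) => //.
- by move=> G D u v P k l Hu Hv Hs Ha _ IH G0 H /=; apply: srt_pref => //; apply: IH.
- by move=> G D P Q t _ IHP _ IHQ G0 H /=; apply: srt_plus; [apply: IHP|apply: IHQ].
Qed.

Lemma binders_substA {Sigma} f (w : seq (atom Sigma)) :
  binders (map (substA f) w) = binders w.
Proof.
elim: w => //= a w IH; case: a => [x|x||s] /=; rewrite /binders /= -/(binders _) ?IH //.
by case: (f x) => [[o|]|] //=.
Qed.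

Lemma vars_substA {Sigma} f (w : seq (atom Sigma)) x :
  x \in vars (map (substA f) w) -> x \in vars w /\ f x = None.
Proof.
elim: w => //= a w IH; case: a => [y|y||s] /=; rewrite /vars /= -/(vars _) //.
case E: (f y) => [[o|]|] /=; rewrite ?in_cons.
- by move/IH=> [-> ->]; rewrite orbT.
- by move/IH=> [-> ->]; rewrite orbT.
- by case/orP=> [/eqP ->|/IH [-> ->]] //; rewrite ?eqxx ?orbT.
Qed.

Lemma sort_substS {Sigma} G D (P : term Sigma) t :
  has_sort G D P t -> forall f D', (forall x, x \in D -> f x = None -> x \in D') ->
  has_sort G D' (substS f P) t.
Proof.
elim=> {G D P t}.
- by move=> G D Y t HG f D' _ /=; constructor.
- by move=> G D P R k n l _ IHP _ IHR f D' H /=; apply: srt_seq; [apply: IHP|apply: IHR].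
- by move=> G D P Q k l m n _ IHP _ IHQ f D' H /=; apply: srt_ten; [apply: IHP|apply: IHQ].
- by move=> G D Y P t _ IH f D' H /=; apply: srt_mu; apply: IH.
- move=> G D u v P k l Hu Hv Hs Ha _ IH f D' H /=.
  have Hvars x : x \in vars (map (substA f) u ++ map (substA f) v) ->
      x \in vars (u ++ v) /\ f x = None by rewrite -map_cat; apply: vars_substA.
  apply: srt_pref; rewrite ?size_map //.
  + by move=> x /Hvars [/Hs /H]; apply.
  + apply/allP=> x /Hvars [xin _]; rewrite -map_cat binders_substA.
    by move/allP: Ha => /(_ x xin).
  + rewrite -map_cat binders_substA; apply: IH => x; rewrite /restrict !mem_cat.
    case: (x \in binders (u ++ v)) => //= xD fx; by rewrite (H _ xD fx).
- by move=> G D P Q t _ IHP _ IHQ f D' H /=; apply: srt_plus; [apply: IHP|apply: IHQ].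
Qed.

Lemma SR {Sigma} (P : term Sigma) a b Q : step P a b Q -> forall t,
  closed_sort P t -> closed_sort Q t /\ size a = t.1 /\ size b = t.2.
Proof.
elim=> {P a b Q}.
- move=> P k l H t H'; have <- := sortU H H'.
  by rewrite !size_nseq.
- move=> P R Q a0 b0 a b _ _ _ IH1 _ IH2 t H.
  by case: (IH1 _ H) => H1 _; apply: IH2.
- move=> P R Q a0 b0 a b _ _ _ IH1 _ IH2 t H.
  by case: (IH1 _ H) => H1 [-> ->]; case: (IH2 _ H1).
- move=> P Q R S a b c _ IH1 _ IH2 [k l] /sort_seq_inv [n [H1 H2]].
  case: (IH1 _ H1) => H1' [/= Ea _]; case: (IH2 _ H2) => H2' [/= _ Eb].
  by split=> //; apply: srt_seq H1' H2'.
- move=> P Q R S a b c d _ IH1 _ IH2 t /sort_ten_inv [k [l [m [n [-> [H1 H2]]]]]].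
  case: (IH1 _ H1) => H1' [/= E1 E2]; case: (IH2 _ H2) => H2' [/= E3 E4].
  by rewrite !size_cat E1 E2 E3 E4; split=> //; apply: srt_ten.
- move=> u v P sg t /sort_pref_inv [-> H]; rewrite !size_map; split=> //.
  apply: (sort_substS H) => x; rewrite cats0 /sgsub => -> //.
- move=> Y t P a b Q _ IH t' /[dup] H /sort_mu_inv [E H']; subst t'.
  apply: IH; apply: (sort_substP H H') => Z s; rewrite /pupd.
  by case: eqP => // _ [].
- by move=> P Q R S a b _ _ _ IH1 _ IH2 t /sort_plus_inv [H1 H2];
    case: (IH1 _ H1) => ? [? ?]; case: (IH2 _ H2) => ? _; split=> //; apply: srt_plus.
- by move=> P R Q a b _ _ IH t /sort_plus_inv [H1 _]; apply: IH.
- by move=> P R Q a b _ _ IH t /sort_plus_inv [_ H1]; apply: IH.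
Qed.

Lemma all_iota_nseq {Sigma} (w : seq (label Sigma)) : all_iota w -> w = nseq (size w) None.
Proof. by elim: w => //= [[s|] w IH] //= /IH <-. Qed.

Lemma all_iota_nseqT {Sigma} n : all_iota (nseq n (@None Sigma)).
Proof. by elim: n. Qed.

Lemma iota_sized {Sigma} (w : seq (label Sigma)) n : all_iota w -> size w = n -> w = nseq n None.
Proof. by move=> /all_iota_nseq E <-. Qed.

Lemma idle {Sigma} (P : term Sigma) t : closed_sort P t -> step P (nseq t.1 None) (nseq t.2 None) P.
Proof. by case: t => k l; apply: st_refl. Qed.

Lemma ten_inv {Sigma} (P : term Sigma) a b W : step P a b W -> forall X Y, P = Ten X Y ->
  exists X' Y' a1 a2 b1 b2, [/\ W = Ten X' Y', a = a1 ++ a2, b = b1 ++ b2,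
     step X a1 b1 X' & step Y a2 b2 Y'].
Proof.
elim=> {P a b W}; try by move=> *; discriminate.
- move=> P k l HP X Y E; subst P.
  case/sort_ten_inv: HP => [k1 [l1 [k2 [l2 [[-> ->] [H1 H2]]]]]].
  exists X, Y, (nseq k1 None), (nseq k2 None), (nseq l1 None), (nseq l2 None).
  by rewrite !nseqD; split=> //; apply: st_refl.
- move=> P R Q a0 b0 a b ia ib _ IH1 _ IH2 X Y E.
  case: (IH1 _ _ E) => [X1 [Y1 [a01 [a02 [b01 [b02 [ER E1 E2 S1 S2]]]]]]]; subst R.
  case: (IH2 _ _ erefl) => [X2 [Y2 [a1 [a2 [b1 [b2 [-> -> -> T1 T2]]]]]]].
  move: ia ib; rewrite E1 E2 /all_iota !all_cat => /andP [i1 i2] /andP [j1 j2].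
  by exists X2, Y2, a1, a2, b1, b2; split=> //; [apply: (st_iotaL i1 j1 S1 T1)|apply: (st_iotaL i2 j2 S2 T2)].
- move=> P R Q a0 b0 a b ia ib _ IH1 _ IH2 X Y E.
  case: (IH1 _ _ E) => [X1 [Y1 [a1 [a2 [b1 [b2 [ER -> -> S1 S2]]]]]]]; subst R.
  case: (IH2 _ _ erefl) => [X2 [Y2 [a01 [a02 [b01 [b02 [-> E1 E2 T1 T2]]]]]]].
  move: ia ib; rewrite E1 E2 /all_iota !all_cat => /andP [i1 i2] /andP [j1 j2].
  by exists X2, Y2, a1, a2, b1, b2; split=> //; [apply: (st_iotaR i1 j1 S1 T1)|apply: (st_iotaR i2 j2 S2 T2)].
- move=> P Q R S a b c d S1 _ S2 _ X Y [<- <-].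
  by exists Q, S, a, c, b, d.
Qed.

Definition RT {Sigma} (A B : term Sigma) :=
  exists X Y Z, A = Ten (Ten X Y) Z /\ B = Ten X (Ten Y Z).

Lemma RT_bisim {Sigma} : bisimulation (@RT Sigma).
Proof.
move=> A B [X [Y [Z [-> ->]]]]; split.
- move=> a b A' /ten_inv /(_ _ _ erefl) [XY [Z' [a12 [a3 [b12 [b3 [-> -> -> S12 S3]]]]]]].
  case: (ten_inv S12 erefl) => [X' [Y' [a1 [a2 [b1 [b2 [-> -> -> S1 S2]]]]]]].
  exists (Ten X' (Ten Y' Z')); last by exists X', Y', Z'.
  by rewrite -!catA; apply: st_ten => //; apply: st_ten.
- move=> a b B' /ten_inv /(_ _ _ erefl) [X' [YZ [a1 [a23 [b1 [b23 [-> -> -> S1 S23]]]]]]].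
  case: (ten_inv S23 erefl) => [Y' [Z' [a2 [a3 [b2 [b3 [-> -> -> S2 S3]]]]]]].
  exists (Ten (Ten X' Y') Z'); last by exists X', Y', Z'.
  by rewrite !catA; apply: st_ten => //; apply: st_ten.
Qed.

Lemma sort_assoc1 {Sigma} (X Y Z : term Sigma) t :
  closed_sort (Seq (Seq X Y) Z) t -> closed_sort (Seq X (Seq Y Z)) t.
Proof.
case: t => k l /sort_seq_inv [n [/sort_seq_inv [j [H1 H2]] H3]] /=.
by apply: srt_seq H1 _; apply: srt_seq H2 H3.
Qed.

Lemma sort_assoc2 {Sigma} (X Y Z : term Sigma) t :
  closed_sort (Seq X (Seq Y Z)) t -> closed_sort (Seq (Seq X Y) Z) t.
Proof.
case: t => k l /sort_seq_inv [n [H1 /sort_seq_inv [j [H2 H3]]]] /=.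
by apply: srt_seq _ H3; apply: srt_seq H1 H2.
Qed.

Lemma assocL {Sigma} (P : term Sigma) a c W : step P a c W ->
  forall X Y Z b Z' t, P = Seq X Y -> closed_sort (Seq P Z) t -> step Z c b Z' ->
  exists X' Y', W = Seq X' Y' /\ step (Seq X (Seq Y Z)) a b (Seq X' (Seq Y' Z')).
Proof.
elim=> {P a c W}; try by move=> *; discriminate.
- move=> P k l HP X Y Z b Z' [k' l'] EP /sort_seq_inv [n [HP' HZ]] SZ; subst P.
  case: (sortU HP HP') => ??; subst k' n.
  case/sort_seq_inv: HP => [j [HX HY]].
  exists X, Y; split=> //.
  apply: st_cut (idle HX) _; apply: st_cut (idle HY) SZ.
- move=> P R Q a0 b0 a c ia ib SP IH1 SR' IH2 X Y Z b Z' [k l] EP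
    /sort_seq_inv [n [HP HZ]] SZ.
  have [HR [_ Eb0]] := SR SP HP.
  have Eb0' := iota_sized ib Eb0.
  case: (IH1 X Y Z (nseq l None) Z (k, l) EP) => //.
  + by apply: srt_seq HP HZ.
  + by rewrite Eb0'; apply: (idle HZ).
  move=> X1 [Y1 [ER S1]]; subst R.
  case: (IH2 X1 Y1 Z b Z' (k, l) erefl) => //.
  + by apply: srt_seq HR HZ.
  move=> X2 [Y2 [-> S2]]; exists X2, Y2; split=> //.
  by apply: (st_iotaL ia (all_iota_nseqT _) S1 S2).
- move=> P R Q a0 b0 a c ia ib SP IH1 SR' IH2 X Y Z b Z' [k l] EP
    /sort_seq_inv [n [HP HZ]] SZ.
  have [HR [_ Ec]] := SR SP HP.
  have [HZ' _] := SR SZ HZ.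
  have [_ [_ Eb0]] := SR SR' HR.
  have Eb0' := iota_sized ib Eb0.
  case: (IH1 X Y Z b Z' (k, l) EP) => //.
  + by apply: srt_seq HP HZ.
  move=> X1 [Y1 [ER S1]]; subst R.
  case: (IH2 X1 Y1 Z' (nseq l None) Z' (k, l) erefl) => //.
  + by apply: srt_seq HR HZ'.
  + by rewrite Eb0'; apply: (idle HZ').
  move=> X2 [Y2 [-> S2]]; exists X2, Y2; split=> //.
  by apply: (st_iotaR ia (all_iota_nseqT _) S1 S2).
- move=> P Q R S a b c SP _ SR' _ X Y Z b' Z' t [<- <-] _ SZ.
  exists Q, S; split=> //; apply: st_cut SP _; apply: st_cut SR' SZ.
Qed.

Lemma assocR {Sigma} (P : term Sigma) c b W : step P c b W ->
  forall X Y Z a X' t, P = Seq Y Z -> closed_sort (Seq X P) t -> step X a c X' ->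
  exists Y' Z', W = Seq Y' Z' /\ step (Seq (Seq X Y) Z) a b (Seq (Seq X' Y') Z').
Proof.
elim=> {P c b W}; try by move=> *; discriminate.
- move=> P k l HP X Y Z a X' [k' l'] EP /sort_seq_inv [n [HX HP']] SX; subst P.
  case: (sortU HP HP') => ??; subst n l'.
  case/sort_seq_inv: HP => [j [HY HZ]].
  exists Y, Z; split=> //.
  apply: st_cut _ (idle HZ); apply: st_cut SX (idle HY).
- move=> P R Q a0 b0 a c ia ib SP IH1 SR' IH2 X Y Z a' X' [k l] EP
    /sort_seq_inv [n [HX HP]] SX.
  have [HR [Ea0 _]] := SR SP HP.
  have Ea0' := iota_sized ia Ea0.
  case: (IH1 X Y Z (nseq k None) X (k, l) EP) => //.
  + by apply: srt_seq HX HP.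
  + by rewrite Ea0'; apply: (idle HX).
  move=> Y1 [Z1 [ER S1]]; subst R.
  case: (IH2 X Y1 Z1 a' X' (k, l) erefl) => //.
  + by apply: srt_seq HX HR.
  move=> Y2 [Z2 [-> S2]]; exists Y2, Z2; split=> //.
  by apply: (st_iotaL (all_iota_nseqT _) ib S1 S2).
- move=> P R Q a0 b0 a c ia ib SP IH1 SR' IH2 X Y Z a' X' [k l] EP
    /sort_seq_inv [n [HX HP]] SX.
  have [HR _] := SR SP HP.
  have [HX' _] := SR SX HX.
  have [_ [Ea0 _]] := SR SR' HR.
  have Ea0' := iota_sized ia Ea0.
  case: (IH1 X Y Z a' X' (k, l) EP) => //.
  + by apply: srt_seq HX HP.
  move=> Y1 [Z1 [ER S1]]; subst R.
  case: (IH2 X' Y1 Z1 (nseq k None) X' (k, l) erefl) => //.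
  + by apply: srt_seq HX' HR.
  + by rewrite Ea0'; apply: (idle HX').
  move=> Y2 [Z2 [-> S2]]; exists Y2, Z2; split=> //.
  by apply: (st_iotaR (all_iota_nseqT _) ib S1 S2).
- move=> P Q R S a b c SP _ SR' _ X Y Z a' X' t [<- <-] _ SX.
  exists Q, S; split=> //; apply: st_cut _ SR'; apply: st_cut SX SP.
Qed.

Lemma assoc_fwd {Sigma} (A : term Sigma) a b W : step A a b W ->
  forall X Y Z t, A = Seq (Seq X Y) Z -> closed_sort A t ->
  exists X' Y' Z', W = Seq (Seq X' Y') Z' /\
     step (Seq X (Seq Y Z)) a b (Seq X' (Seq Y' Z')).
Proof.
elim=> {A a b W}; try by move=> *; discriminate.
- move=> A k l HA X Y Z t EA _; subst A.
  by exists X, Y, Z; split=> //; apply: st_refl; apply: sort_assoc1.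
- move=> A R Q a0 b0 a b ia ib SA IH1 _ IH2 X Y Z t EA HA.
  case: (IH1 X Y Z t EA HA) => [X1 [Y1 [Z1 [ER S1]]]]; subst R.
  have [HR _] := SR SA HA.
  case: (IH2 X1 Y1 Z1 t erefl HR) => [X2 [Y2 [Z2 [-> S2]]]].
  by exists X2, Y2, Z2; split=> //; apply: (st_iotaL ia ib S1 S2).
- move=> A R Q a0 b0 a b ia ib SA IH1 _ IH2 X Y Z t EA HA.
  case: (IH1 X Y Z t EA HA) => [X1 [Y1 [Z1 [ER S1]]]]; subst R.
  have [HR _] := SR SA HA.
  case: (IH2 X1 Y1 Z1 t erefl HR) => [X2 [Y2 [Z2 [-> S2]]]].
  by exists X2, Y2, Z2; split=> //; apply: (st_iotaR ia ib S1 S2).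
- move=> P Q R S a b c SP _ SR' _ X Y Z t [EP ER] HA; subst P R.
  case: (assocL SP erefl HA SR') => [X' [Y' [-> S1]]].
  by exists X', Y', S.
Qed.

Lemma assoc_bwd {Sigma} (A : term Sigma) a b W : step A a b W ->
  forall X Y Z t, A = Seq X (Seq Y Z) -> closed_sort A t ->
  exists X' Y' Z', W = Seq X' (Seq Y' Z') /\
     step (Seq (Seq X Y) Z) a b (Seq (Seq X' Y') Z').
Proof.
elim=> {A a b W}; try by move=> *; discriminate.
- move=> A k l HA X Y Z t EA _; subst A.
  by exists X, Y, Z; split=> //; apply: st_refl; apply: sort_assoc2.
- move=> A R Q a0 b0 a b ia ib SA IH1 _ IH2 X Y Z t EA HA.
  case: (IH1 X Y Z t EA HA) => [X1 [Y1 [Z1 [ER S1]]]]; subst R.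
  have [HR _] := SR SA HA.
  case: (IH2 X1 Y1 Z1 t erefl HR) => [X2 [Y2 [Z2 [-> S2]]]].
  by exists X2, Y2, Z2; split=> //; apply: (st_iotaL ia ib S1 S2).
- move=> A R Q a0 b0 a b ia ib SA IH1 _ IH2 X Y Z t EA HA.
  case: (IH1 X Y Z t EA HA) => [X1 [Y1 [Z1 [ER S1]]]]; subst R.
  have [HR _] := SR SA HA.
  case: (IH2 X1 Y1 Z1 t erefl HR) => [X2 [Y2 [Z2 [-> S2]]]].
  by exists X2, Y2, Z2; split=> //; apply: (st_iotaR ia ib S1 S2).
- move=> P Q R S a b c SP _ SR' _ X Y Z t [EP ER] HA; subst P R.
  case: (assocR SR' erefl HA SP) => [Y' [Z' [-> S1]]].
  by exists Q, Y', Z'.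
Qed.

Definition RA {Sigma} (A B : term Sigma) :=
  exists X Y Z t, [/\ A = Seq (Seq X Y) Z, B = Seq X (Seq Y Z) & closed_sort A t].

Lemma RA_bisim {Sigma} : bisimulation (@RA Sigma).
Proof.
move=> A B [X [Y [Z [t [EA EB HA]]]]]; split.
- move=> a b A' SA; case: (assoc_fwd SA EA HA) => [X' [Y' [Z' [EA' S]]]].
  rewrite EB; exists (Seq X' (Seq Y' Z')) => //.
  exists X', Y', Z', t; split=> //; exact: (SR SA HA).1.
- move=> a b B' SB; have HB : closed_sort B t by rewrite EB; apply: sort_assoc1; rewrite -EA.
  case: (assoc_bwd SB EB HB) => [X' [Y' [Z' [EB' S]]]].
  rewrite EA; exists (Seq (Seq X' Y') Z') => //.
  exists X', Y', Z', t; split=> //; apply: sort_assoc2; rewrite -EB'; exact: (SR SB HB).1.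
Qed.

Lemma cat_split {T : Type} (s1 s2 s3 s4 : seq T) :
  size s1 = size s2 -> s1 ++ s3 = s2 ++ s4 -> s1 = s2 /\ s3 = s4.
Proof.
move=> Es E; have E1 := congr1 (take (size s1)) E; have E2 := congr1 (drop (size s1)) E.
rewrite take_size_cat // Es take_size_cat // in E1.
by rewrite drop_size_cat // Es drop_size_cat // in E2.
Qed.

Lemma inter_fwd {Sigma} (A : term Sigma) a b W : step A a b W ->
  forall X Y Z V k l m n u v, A = Seq (Ten X Y) (Ten Z V) ->
  closed_sort X (k, l) -> closed_sort Y (n, u) -> closed_sort Z (l, m) -> closed_sort V (u, v) ->
  exists X' Y' Z' V', [/\ W = Seq (Ten X' Y') (Ten Z' V'),
    [/\ closed_sort X' (k, l), closed_sort Y' (n, u), closed_sort Z' (l, m) & closed_sort V' (u, v)] &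
     step (Ten (Seq X Z) (Seq Y V)) a b (Ten (Seq X' Z') (Seq Y' V'))].
Proof.
elim=> {A a b W}; try by move=> *; discriminate.
- move=> A k0 l0 HA X Y Z V k l m n u v EA HX HY HZ HV; subst A.
  have HA' : closed_sort (Seq (Ten X Y) (Ten Z V)) (k + n, m + v).
    exact: (srt_seq (srt_ten HX HY) (srt_ten HZ HV)).
  case: (sortU HA HA') => ??; subst k0 l0.
  exists X, Y, Z, V; split=> //; apply: st_refl.
  exact: (srt_ten (srt_seq HX HZ) (srt_seq HY HV)).
- move=> A R Q a0 b0 a b ia ib SA IH1 _ IH2 X Y Z V k l m n u v EA HX HY HZ HV.
  case: (IH1 X Y Z V k l m n u v EA HX HY HZ HV) => [X1 [Y1 [Z1 [V1 [ER [H1 H2 H3 H4] S1]]]]]; subst R.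
  case: (IH2 X1 Y1 Z1 V1 k l m n u v erefl H1 H2 H3 H4) => [X2 [Y2 [Z2 [V2 [-> HH S2]]]]].
  by exists X2, Y2, Z2, V2; split=> //; apply: (st_iotaL ia ib S1 S2).
- move=> A R Q a0 b0 a b ia ib SA IH1 _ IH2 X Y Z V k l m n u v EA HX HY HZ HV.
  case: (IH1 X Y Z V k l m n u v EA HX HY HZ HV) => [X1 [Y1 [Z1 [V1 [ER [H1 H2 H3 H4] S1]]]]]; subst R.
  case: (IH2 X1 Y1 Z1 V1 k l m n u v erefl H1 H2 H3 H4) => [X2 [Y2 [Z2 [V2 [-> HH S2]]]]].
  by exists X2, Y2, Z2, V2; split=> //; apply: (st_iotaR ia ib S1 S2).
- move=> P Q R S a b c SP _ SR' _ X Y Z V k l m n u v [EP ER] HX HY HZ HV; subst P R.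
  case: (ten_inv SP erefl) => [X' [Y' [a1 [a2 [c1 [c2 [E1 E2 E3 S1 S2]]]]]]].
  case: (ten_inv SR' erefl) => [Z' [V' [d1 [d2 [b1 [b2 [E4 E E5 T1 T2]]]]]]].
  subst Q S a b c.
  have [HX' [_ Ec1]] := SR S1 HX.
  have [HZ' [Ed1 _]] := SR T1 HZ.
  have [HY' _] := SR S2 HY.
  have [HV' _] := SR T2 HV.
  case: (cat_split _ E) => [|??]; first by rewrite Ec1 Ed1.
  subst d1 d2.
  exists X', Y', Z', V'; split=> //.
  by apply: st_ten; apply: st_cut; eassumption.
Qed.

Lemma all_iota_cat {Sigma} (w1 w2 : seq (label Sigma)) :
  all_iota w1 -> all_iota w2 -> all_iota (w1 ++ w2).
Proof. by rewrite /all_iota all_cat => -> ->. Qed.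

Lemma inter_bwd2 {Sigma} (P : term Sigma) a2 b2 Wp : step P a2 b2 Wp ->
  forall Y V X Z X' Z' a1 c1 b1 k l m, P = Seq Y V ->
  closed_sort X (k, l) -> closed_sort Z (l, m) -> step X a1 c1 X' -> step Z c1 b1 Z' ->
  exists Y' V', Wp = Seq Y' V' /\
    step (Seq (Ten X Y) (Ten Z V)) (a1 ++ a2) (b1 ++ b2) (Seq (Ten X' Y') (Ten Z' V')).
Proof.
elim=> {P a2 b2 Wp}; try by move=> *; discriminate.
- move=> P k0 l0 HP Y V X Z X' Z' a1 c1 b1 k l m EP HX HZ SX SZ; subst P.
  case/sort_seq_inv: HP => [j [HY HV]].
  exists Y, V; split=> //.
  exact: (st_cut (st_ten SX (idle HY)) (st_ten SZ (idle HV))).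
- move=> P R Q a0 b0 a b ia ib SP IH1 _ IH2 Y V X Z X' Z' a1 c1 b1 k l m EP HX HZ SX SZ.
  case: (IH1 Y V X Z X Z (nseq k None) (nseq l None) (nseq m None) k l m EP HX HZ
          (idle HX) (idle HZ)) => [Y1 [V1 [ER S1]]]; subst R.
  case: (IH2 Y1 V1 X Z X' Z' a1 c1 b1 k l m erefl HX HZ SX SZ) => [Y2 [V2 [-> S2]]].
  exists Y2, V2; split=> //.
  apply: (st_iotaL _ _ S1 S2); apply: all_iota_cat => //; exact: all_iota_nseqT.
- move=> P R Q a0 b0 a b ia ib SP IH1 _ IH2 Y V X Z X' Z' a1 c1 b1 k l m EP HX HZ SX SZ.
  have [HX' _] := SR SX HX; have [HZ' _] := SR SZ HZ.
  case: (IH1 Y V X Z X' Z' a1 c1 b1 k l m EP HX HZ SX SZ) => [Y1 [V1 [ER S1]]]; subst R.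
  case: (IH2 Y1 V1 X' Z' X' Z' (nseq k None) (nseq l None) (nseq m None) k l m erefl HX' HZ'
          (idle HX') (idle HZ')) => [Y2 [V2 [-> S2]]].
  exists Y2, V2; split=> //.
  apply: (st_iotaR _ _ S1 S2); apply: all_iota_cat => //; exact: all_iota_nseqT.
- move=> P Q R S a b c SP _ SR' _ Y V X Z X' Z' a1 c1 b1 k l m [EP ER] HX HZ SX SZ; subst P R.
  exists Q, S; split=> //.
  exact: (st_cut (st_ten SX SP) (st_ten SZ SR')).
Qed.

Lemma inter_bwd {Sigma} (P : term Sigma) a1 b1 Wp : step P a1 b1 Wp ->
  forall X Z Y V a2 b2 Wq t1 t2, P = Seq X Z -> closed_sort P t1 ->
  closed_sort (Seq Y V) t2 -> step (Seq Y V) a2 b2 Wq ->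
  exists X' Z' Y' V', [/\ Wp = Seq X' Z', Wq = Seq Y' V' &
    step (Seq (Ten X Y) (Ten Z V)) (a1 ++ a2) (b1 ++ b2) (Seq (Ten X' Y') (Ten Z' V'))].
Proof.
elim=> {P a1 b1 Wp}; try by move=> *; discriminate.
- move=> P k0 l0 HP X Z Y V a2 b2 Wq t1 t2 EP _ HYV SYV; subst P.
  case/sort_seq_inv: HP => [j [HX HZ]].
  case: (inter_bwd2 SYV erefl HX HZ (idle HX) (idle HZ)) => [Y' [V' [-> S]]].
  by exists X, Z, Y', V'.
- move=> P R Q a0 b0 a b ia ib SP IH1 _ IH2 X Z Y V a2 b2 Wq t1 t2 EP HP HYV SYV.
  have [HR _] := SR SP HP.
  case: (IH1 X Z Y V _ _ _ t1 t2 EP HP HYV (idle HYV)) => [X1 [Z1 [Y1 [V1 [ER EYV S1]]]]].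
  subst R; case: EYV => ??; subst Y1 V1.
  case: (IH2 X1 Z1 Y V a2 b2 Wq t1 t2 erefl HR HYV SYV) => [X2 [Z2 [Y2 [V2 [-> -> S2]]]]].
  exists X2, Z2, Y2, V2; split=> //.
  apply: (st_iotaL _ _ S1 S2); apply: all_iota_cat => //; exact: all_iota_nseqT.
- move=> P R Q a0 b0 a b ia ib SP IH1 _ IH2 X Z Y V a2 b2 Wq t1 t2 EP HP HYV SYV.
  have [HR _] := SR SP HP.
  have [HWq _] := SR SYV HYV.
  case: (IH1 X Z Y V a2 b2 Wq t1 t2 EP HP HYV SYV) => [X1 [Z1 [Y1 [V1 [ER EWq S1]]]]].
  subst R Wq.
  case: (IH2 X1 Z1 Y1 V1 _ _ _ t1 t2 erefl HR HWq (idle HWq)) => [X2 [Z2 [Y2 [V2 [-> EYV S2]]]]].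
  case: EYV => ??; subst Y2 V2.
  exists X2, Z2, Y1, V1; split=> //.
  apply: (st_iotaR _ _ S1 S2); apply: all_iota_cat => //; exact: all_iota_nseqT.
- move=> P Q R S a b c SP _ SR' _ X Z Y V a2 b2 Wq t1 t2 [EP ER] HP HYV SYV; subst P R.
  case/sort_seq_inv: HP => [j [HX HZ]].
  case: (inter_bwd2 SYV erefl HX HZ SP SR') => [Y' [V' [-> S']]].
  by exists Q, S, Y', V'.
Qed.

Definition RI {Sigma} (A B : term Sigma) :=
  exists X Y Z V k l m n u v, A = Seq (Ten X Y) (Ten Z V) /\ B = Ten (Seq X Z) (Seq Y V) /\
    [/\ closed_sort X (k, l), closed_sort Y (n, u), closed_sort Z (l, m) & closed_sort V (u, v)].

Lemma RI_bisim {Sigma} : bisimulation (@RI Sigma).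
Proof.
move=> A B [X [Y [Z [V [k [l [m [n [u [v [EA [EB [HX HY HZ HV]]]]]]]]]]]]]; split.
- move=> a b A' SA; case: (inter_fwd SA EA HX HY HZ HV) =>
    [X' [Y' [Z' [V' [-> [H1 H2 H3 H4] S]]]]].
  rewrite EB; exists (Ten (Seq X' Z') (Seq Y' V')) => //.
  by exists X', Y', Z', V', k, l, m, n, u, v.
- move=> a b B' SB; rewrite EB in SB.
  case: (ten_inv SB erefl) => [W1 [W2 [a1 [a2 [b1 [b2 [EB' Ea Eb S1 S2]]]]]]].
  subst B' a b.
  have HXZ : closed_sort (Seq X Z) (k, m) by apply: srt_seq HX HZ.
  have HYV : closed_sort (Seq Y V) (n, v) by apply: srt_seq HY HV.
  have [HW1 _] := SR S1 HXZ; have [HW2 _] := SR S2 HYV.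
  case: (inter_bwd S1 erefl HXZ HYV S2) => [X' [Z' [Y' [V' [E1 E2 S]]]]]; subst W1 W2.
  rewrite EA; exists (Seq (Ten X' Y') (Ten Z' V')) => //.
  case/sort_seq_inv: HW1 => [j [H1 H3]]; case/sort_seq_inv: HW2 => [j' [H2 H4]].
  by exists X', Y', Z', V', k, j, m, n, j', v.
Qed.

Lemma binders_ABind {Sigma} (s : seq nat) : binders (map (@ABind Sigma) s) = s.
Proof. by elim: s => //= x s IH; rewrite /binders /= -/(binders _) IH. Qed.

Lemma vars_ABind {Sigma} (s : seq nat) : vars (map (@ABind Sigma) s) = [::].
Proof. by elim: s. Qed.

Lemma substA_ABind {Sigma} f (s : seq nat) : map (substA f) (map (@ABind Sigma) s) = map (@ABind Sigma) s.
Proof. by elim: s => //= x s ->. Qed.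

Lemma labA_ABind {Sigma} sg (s : seq nat) : map (labA sg) (map (@ABind Sigma) s) = map sg s.
Proof. by elim: s => //= x s ->. Qed.

Lemma sort_Pref0 {Sigma} (u v : seq nat) t :
  size u = t.1 -> size v = t.2 ->
  has_sort (pupd pempty 0 t) [::] (Pref (map (@ABind Sigma) u) (map (@ABind Sigma) v) (PV 0)) t.
Proof.
case: t => k l /= Hu Hv; apply: srt_pref; rewrite ?size_map //.
- by rewrite -map_cat vars_ABind.
- by rewrite -map_cat vars_ABind.
- by constructor; rewrite /pupd eqxx.
Qed.

Lemma sort_Pref1 {Sigma} (u v : seq nat) (N : term Sigma) t :
  size u = t.1 -> size v = t.2 -> closed_sort N t ->
  closed_sort (Pref (map (@ABind Sigma) u) (map (@ABind Sigma) v) N) t.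
Proof.
case: t => k l /= Hu Hv HN; apply: srt_pref; rewrite ?size_map //.
- by rewrite -map_cat vars_ABind.
- by rewrite -map_cat vars_ABind.
- by apply: (sort_weaken HN).
Qed.

Definition PrefI {Sigma} l : term Sigma :=
  Pref (map (@ABind Sigma) (iota 0 l)) (map (@ABind Sigma) (iota 0 l)) (Id_k l).
Definition isI {Sigma} l (J : term Sigma) := J = Id_k l \/ J = PrefI l.

Lemma sort_Id {Sigma} l : closed_sort (@Id_k Sigma l) (l, l).
Proof. by apply: srt_mu; apply: sort_Pref0; rewrite /= size_iota. Qed.

Lemma sort_isI {Sigma} l (J : term Sigma) : isI l J -> closed_sort J (l, l).
Proof.
case=> ->; first exact: sort_Id.
by apply: sort_Pref1; rewrite ?size_iota //; apply: sort_Id.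
Qed.

Lemma substS_Id {Sigma} f l : substS f (@Id_k Sigma l) = Id_k l.
Proof. by rewrite /= !substA_ABind. Qed.

Lemma isI_step {Sigma} (J : term Sigma) a b Q : step J a b Q -> forall l, isI l J ->
  [/\ a = b, size a = l & isI l Q].
Proof.
elim=> {J a b Q}.
- move=> P k l' HP l HI; have := sortU HP (sort_isI HI); case=> ??; subst.
  by rewrite size_nseq.
- move=> P R Q a0 b0 a b _ _ _ IH1 _ IH2 l HI.
  by case: (IH1 _ HI) => _ _ /IH2.
- move=> P R Q a0 b0 a b _ _ _ IH1 _ IH2 l HI.
  by case: (IH1 _ HI) => ? ? /IH2 [].
- by move=> P Q R S a b c _ _ _ _ l [|].
- by move=> P Q R S a b c d _ _ _ _ l [|].
- move=> u v P sg l [//|[???]]; subst.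
  by rewrite substS_Id labA_ABind size_map size_iota; split=> //; left.
- move=> Y t P a b Q _ IH l [[???]|//]; subst.
  by apply: IH; right.
- by move=> P Q R S a b _ _ _ _ _ _ l [|].
- by move=> P R Q a b _ _ _ l [|].
- by move=> P R Q a b _ _ _ l [|].
Qed.

Lemma isI_go {Sigma} l (J : term Sigma) w : isI l J -> size w = l -> step J w w (Id_k l).
Proof.
move=> HI Hw.
have HP : step (PrefI l) w w (Id_k l).
  have := st_pref (map (@ABind Sigma) (iota 0 l)) (map (@ABind Sigma) (iota 0 l)) (Id_k l) (nth None w).
  by rewrite substS_Id labA_ABind map_nth_iota0 ?Hw // -Hw take_size.
case: HI => ->; last exact: HP.
by apply: st_rec.
Qed.

Lemma idR_fwd {Sigma} (A : term Sigma) a b W : step A a b W ->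
  forall X J k l, A = Seq X J -> closed_sort X (k, l) -> isI l J ->
  exists X' J', [/\ W = Seq X' J', isI l J' & step X a b X'].
Proof.
elim=> {A a b W}; try by move=> *; discriminate.
- move=> A k0 l0 HA X J k l EA HX HJ; subst A.
  have := sortU HA (srt_seq HX (sort_isI HJ)); case=> ??; subst.
  by exists X, J; split=> //; apply: st_refl.
- move=> A R Q a0 b0 a b ia ib SA IH1 _ IH2 X J k l EA HX HJ.
  case: (IH1 X J k l EA HX HJ) => [X1 [J1 [ER HJ1 S1]]]; subst R.
  have [HX1 _] := SR S1 HX.
  case: (IH2 X1 J1 k l erefl HX1 HJ1) => [X2 [J2 [-> HJ2 S2]]].
  by exists X2, J2; split=> //; apply: (st_iotaL ia ib S1 S2).
- move=> A R Q a0 b0 a b ia ib SA IH1 _ IH2 X J k l EA HX HJ.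
  case: (IH1 X J k l EA HX HJ) => [X1 [J1 [ER HJ1 S1]]]; subst R.
  have [HX1 _] := SR S1 HX.
  case: (IH2 X1 J1 k l erefl HX1 HJ1) => [X2 [J2 [-> HJ2 S2]]].
  by exists X2, J2; split=> //; apply: (st_iotaR ia ib S1 S2).
- move=> P Q R S a b c SP _ SR' _ X J k l [EP ER] HX HJ; subst P R.
  case: (isI_step SR' HJ) => Ec _ HS; subst c.
  by exists Q, S.
Qed.

Lemma idL_fwd {Sigma} (A : term Sigma) a b W : step A a b W ->
  forall X J k l, A = Seq J X -> closed_sort X (k, l) -> isI k J ->
  exists X' J', [/\ W = Seq J' X', isI k J' & step X a b X'].
Proof.
elim=> {A a b W}; try by move=> *; discriminate.
- move=> A k0 l0 HA X J k l EA HX HJ; subst A.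
  have := sortU HA (srt_seq (sort_isI HJ) HX); case=> ??; subst.
  by exists X, J; split=> //; apply: st_refl.
- move=> A R Q a0 b0 a b ia ib SA IH1 _ IH2 X J k l EA HX HJ.
  case: (IH1 X J k l EA HX HJ) => [X1 [J1 [ER HJ1 S1]]]; subst R.
  have [HX1 _] := SR S1 HX.
  case: (IH2 X1 J1 k l erefl HX1 HJ1) => [X2 [J2 [-> HJ2 S2]]].
  by exists X2, J2; split=> //; apply: (st_iotaL ia ib S1 S2).
- move=> A R Q a0 b0 a b ia ib SA IH1 _ IH2 X J k l EA HX HJ.
  case: (IH1 X J k l EA HX HJ) => [X1 [J1 [ER HJ1 S1]]]; subst R.
  have [HX1 _] := SR S1 HX.
  case: (IH2 X1 J1 k l erefl HX1 HJ1) => [X2 [J2 [-> HJ2 S2]]].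
  by exists X2, J2; split=> //; apply: (st_iotaR ia ib S1 S2).
- move=> P Q R S a b c SP _ SR' _ X J k l [EP ER] HX HJ; subst P R.
  case: (isI_step SP HJ) => Ec _ HS; subst c.
  by exists S, Q.
Qed.

Definition RidR {Sigma} (A B : term Sigma) :=
  exists X J k l, [/\ A = Seq X J, B = X, closed_sort X (k, l) & isI l J].
Definition RidL {Sigma} (A B : term Sigma) :=
  exists X J k l, [/\ A = X, B = Seq J X, closed_sort X (k, l) & isI k J].

Lemma RidR_bisim {Sigma} : bisimulation (@RidR Sigma).
Proof.
move=> A B [X [J [k [l [EA EB HX HJ]]]]]; subst A B; split.
- move=> a b A' SA; case: (idR_fwd SA erefl HX HJ) => [X' [J' [-> HJ' S]]].
  exists X' => //; exists X', J', k, l; split=> //; exact: (SR S HX).1.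
- move=> a b X' SX; have [HX' [_ Eb]] := SR SX HX.
  exists (Seq X' (Id_k l)); first by apply: st_cut SX (isI_go HJ Eb).
  by exists X', (Id_k l), k, l; split=> //; left.
Qed.

Lemma RidL_bisim {Sigma} : bisimulation (@RidL Sigma).
Proof.
move=> A B [X [J [k [l [EA EB HX HJ]]]]]; subst A B; split.
- move=> a b X' SX; have [HX' [Ea _]] := SR SX HX.
  exists (Seq (Id_k k) X'); first by apply: st_cut (isI_go HJ Ea) SX.
  by exists X', (Id_k k), k, l; split=> //; left.
- move=> a b A' SA; case: (idL_fwd SA erefl HX HJ) => [X' [J' [-> HJ' S]]].
  exists X' => //; exists X', J', k, l; split=> //; exact: (SR S HX).1.
Qed.

Definition PrefSw {Sigma} k l : term Sigma :=
  Pref (map (@ABind Sigma) (iota 0 k ++ iota k l)) (map (@ABind Sigma) (iota k l ++ iota 0 k))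
       (Sw k l).
Definition isSw {Sigma} k l (J : term Sigma) := J = Sw k l \/ J = PrefSw k l.

Lemma sort_Sw {Sigma} k l : closed_sort (@Sw Sigma k l) (k + l, l + k).
Proof. by apply: srt_mu; apply: sort_Pref0; rewrite /= size_cat !size_iota. Qed.

Lemma sort_isSw {Sigma} k l (J : term Sigma) : isSw k l J -> closed_sort J (k + l, l + k).
Proof.
case=> ->; first exact: sort_Sw.
by apply: sort_Pref1; rewrite /= ?size_cat ?size_iota //; apply: sort_Sw.
Qed.

Lemma substS_Sw {Sigma} f k l : substS f (@Sw Sigma k l) = Sw k l.
Proof. by rewrite /= !substA_ABind. Qed.

Lemma isSw_step {Sigma} (J : term Sigma) a b Q : step J a b Q -> forall k l, isSw k l J ->
  exists w1 w2, [/\ size w1 = k, size w2 = l, a = w1 ++ w2, b = w2 ++ w1 & isSw k l Q].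
Proof.
elim=> {J a b Q}.
- move=> P k0 l0 HP k l HI; have := sortU HP (sort_isSw HI); case=> ??; subst.
  exists (nseq k None), (nseq l None); rewrite !size_nseq -!nseqD; split=> //.
- move=> P R Q a0 b0 a b _ _ _ IH1 _ IH2 k l HI.
  by case: (IH1 _ _ HI) => w1 [w2 [_ _ _ _ /IH2]].
- move=> P R Q a0 b0 a b _ _ _ IH1 _ IH2 k l HI.
  case: (IH1 _ _ HI) => w1 [w2 [E1 E2 -> -> /IH2 [v1 [v2 [_ _ _ _ HQ]]]]].
  by exists w1, w2.
- by move=> P Q R S a b c _ _ _ _ k l [|].
- by move=> P Q R S a b c d _ _ _ _ k l [|].
- move=> u v P sg k l [//|[???]]; subst.
  rewrite substS_Sw !labA_ABind !map_cat.
  exists (map sg (iota 0 k)), (map sg (iota k l)); rewrite !size_map !size_iota.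
  by split=> //; left.
- move=> Y t P a b Q _ IH k l [[???]|//]; subst.
  by apply: IH; right.
- by move=> P Q R S a b _ _ _ _ _ _ k l [|].
- by move=> P R Q a b _ _ _ k l [|].
- by move=> P R Q a b _ _ _ k l [|].
Qed.

Lemma isSw_go {Sigma} k l (J : term Sigma) w1 w2 : isSw k l J -> size w1 = k -> size w2 = l ->
  step J (w1 ++ w2) (w2 ++ w1) (Sw k l).
Proof.
move=> HI H1 H2.
have E1 : map (nth None (w1 ++ w2)) (iota 0 k) = w1.
  by rewrite map_nth_iota0 ?size_cat -?H1 ?leq_addr // take_size_cat.
have E2 : map (nth None (w1 ++ w2)) (iota k l) = w2.
  rewrite map_nth_iota; first by rewrite drop_size_cat // -H2 take_size.
  by rewrite size_cat H1 H2 addKn.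
have HP : step (PrefSw k l) (w1 ++ w2) (w2 ++ w1) (Sw k l).
  have := st_pref (map (@ABind Sigma) (iota 0 k ++ iota k l))
     (map (@ABind Sigma) (iota k l ++ iota 0 k)) (Sw k l) (nth None (w1 ++ w2)).
  by rewrite substS_Sw !labA_ABind !map_cat E1 E2 /PrefSw !map_cat.
case: HI => ->; last exact: HP.
by apply: st_rec.
Qed.

Lemma sw_fwd {Sigma} (A : term Sigma) a b W : step A a b W ->
  forall X Y J J' k l m n, A = Seq (Ten X Y) J ->
  closed_sort X (k, l) -> closed_sort Y (m, n) -> isSw l n J -> isSw k m J' ->
  exists X' Y' J1 J1', [/\ W = Seq (Ten X' Y') J1, isSw l n J1, isSw k m J1',
     closed_sort X' (k, l) /\ closed_sort Y' (m, n) &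
     step (Seq J' (Ten Y X)) a b (Seq J1' (Ten Y' X'))].
Proof.
elim=> {A a b W}; try by move=> *; discriminate.
- move=> A k0 l0 HA X Y J J' k l m n EA HX HY HJ HJ'; subst A.
  have := sortU HA (srt_seq (srt_ten HX HY) (sort_isSw HJ)); case=> ??; subst.
  exists X, Y, J, J'; split=> //; apply: st_refl.
  exact: (srt_seq (sort_isSw HJ') (srt_ten HY HX)).
- move=> A R Q a0 b0 a b ia ib SA IH1 _ IH2 X Y J J' k l m n EA HX HY HJ HJ'.
  case: (IH1 X Y J J' k l m n EA HX HY HJ HJ') => [X1 [Y1 [J1 [J1' [ER H1 H2 [H3 H4] S1]]]]].
  subst R.
  case: (IH2 X1 Y1 J1 J1' k l m n erefl H3 H4 H1 H2) => [X2 [Y2 [J2 [J2' [-> G1 G2 G3 S2]]]]].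
  by exists X2, Y2, J2, J2'; split=> //; apply: (st_iotaL ia ib S1 S2).
- move=> A R Q a0 b0 a b ia ib SA IH1 _ IH2 X Y J J' k l m n EA HX HY HJ HJ'.
  case: (IH1 X Y J J' k l m n EA HX HY HJ HJ') => [X1 [Y1 [J1 [J1' [ER H1 H2 [H3 H4] S1]]]]].
  subst R.
  case: (IH2 X1 Y1 J1 J1' k l m n erefl H3 H4 H1 H2) => [X2 [Y2 [J2 [J2' [-> G1 G2 G3 S2]]]]].
  by exists X2, Y2, J2, J2'; split=> //; apply: (st_iotaR ia ib S1 S2).
- move=> P Q R S a b c SP _ SR' _ X Y J J' k l m n [EP ER] HX HY HJ HJ'; subst P R.
  case: (ten_inv SP erefl) => [X' [Y' [a1 [a2 [c1 [c2 [E1 E2 E3 S1 S2]]]]]]].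
  case: (isSw_step SR' HJ) => [w1 [w2 [Hw1 Hw2 E4 E5 HS]]].
  subst Q a b c.
  have [HX' [Ea1 Ec1]] := SR S1 HX; have [HY' [Ea2 Ec2]] := SR S2 HY.
  case: (cat_split _ E4) => [|??]; first by rewrite Ec1 Hw1.
  subst c1 c2.
  exists X', Y', S, (Sw k m); split=> //; first by left.
  exact: (st_cut (isSw_go HJ' Ea1 Ea2) (st_ten S2 S1)).
Qed.

Lemma sw_bwd {Sigma} (B : term Sigma) a b W : step B a b W ->
  forall X Y J J' k l m n, B = Seq J' (Ten Y X) ->
  closed_sort X (k, l) -> closed_sort Y (m, n) -> isSw l n J -> isSw k m J' ->
  exists X' Y' J1 J1', [/\ W = Seq J1' (Ten Y' X'), isSw l n J1, isSw k m J1',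
     closed_sort X' (k, l) /\ closed_sort Y' (m, n) &
     step (Seq (Ten X Y) J) a b (Seq (Ten X' Y') J1)].
Proof.
elim=> {B a b W}; try by move=> *; discriminate.
- move=> A k0 l0 HA X Y J J' k l m n EA HX HY HJ HJ'; subst A.
  have := sortU HA (srt_seq (sort_isSw HJ') (srt_ten HY HX)); case=> ??; subst.
  exists X, Y, J, J'; split=> //; apply: st_refl.
  exact: (srt_seq (srt_ten HX HY) (sort_isSw HJ)).
- move=> A R Q a0 b0 a b ia ib SA IH1 _ IH2 X Y J J' k l m n EA HX HY HJ HJ'.
  case: (IH1 X Y J J' k l m n EA HX HY HJ HJ') => [X1 [Y1 [J1 [J1' [ER H1 H2 [H3 H4] S1]]]]].
  subst R.
  case: (IH2 X1 Y1 J1 J1' k l m n erefl H3 H4 H1 H2) => [X2 [Y2 [J2 [J2' [-> G1 G2 G3 S2]]]]].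
  by exists X2, Y2, J2, J2'; split=> //; apply: (st_iotaL ia ib S1 S2).
- move=> A R Q a0 b0 a b ia ib SA IH1 _ IH2 X Y J J' k l m n EA HX HY HJ HJ'.
  case: (IH1 X Y J J' k l m n EA HX HY HJ HJ') => [X1 [Y1 [J1 [J1' [ER H1 H2 [H3 H4] S1]]]]].
  subst R.
  case: (IH2 X1 Y1 J1 J1' k l m n erefl H3 H4 H1 H2) => [X2 [Y2 [J2 [J2' [-> G1 G2 G3 S2]]]]].
  by exists X2, Y2, J2, J2'; split=> //; apply: (st_iotaR ia ib S1 S2).
- move=> P Q R S a b c SP _ SR' _ X Y J J' k l m n [EP ER] HX HY HJ HJ'; subst P R.
  case: (isSw_step SP HJ') => [w1 [w2 [Hw1 Hw2 E1 E2 HS]]].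
  case: (ten_inv SR' erefl) => [Y' [X' [c1 [c2 [b1 [b2 [E3 E4 E5 S1 S2]]]]]]].
  subst S a b c.
  have [HX' [Ec2 Eb2]] := SR S2 HX; have [HY' [Ec1 Eb1]] := SR S1 HY.
  case: (cat_split _ E4) => [|??]; first by rewrite Ec1 Hw2.
  subst c1 c2.
  exists X', Y', (Sw l n), Q; split=> //; first by left.
  exact: (st_cut (st_ten S2 S1) (isSw_go HJ Eb2 Eb1)).
Qed.

Definition RS {Sigma} (A B : term Sigma) :=
  exists X Y J J' k l m n, [/\ A = Seq (Ten X Y) J, B = Seq J' (Ten Y X),
    closed_sort X (k, l) /\ closed_sort Y (m, n), isSw l n J & isSw k m J'].

Lemma RS_bisim {Sigma} : bisimulation (@RS Sigma).
Proof.
move=> A B [X [Y [J [J' [k [l [m [n [EA EB [HX HY] HJ HJ']]]]]]]]]; split.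
- move=> a b A' SA; case: (sw_fwd SA EA HX HY HJ HJ') => [X' [Y' [J1 [J1' [-> H1 H2 [H3 H4] S]]]]].
  rewrite EB; exists (Seq J1' (Ten Y' X')) => //.
  by exists X', Y', J1, J1', k, l, m, n.
- move=> a b B' SB; case: (sw_bwd SB EB HX HY HJ HJ') => [X' [Y' [J1 [J1' [-> H1 H2 [H3 H4] S]]]]].
  rewrite EA; exists (Seq (Ten X' Y') J1) => //.
  by exists X', Y', J1, J1', k, l, m, n.
Qed.

Lemma swsw_fwd {Sigma} (A : term Sigma) a b W : step A a b W ->
  forall J1 J2 k l, A = Seq J1 J2 -> isSw k l J1 -> isSw l k J2 ->
  [/\ a = b, size a = k + l & exists J1' J2', [/\ W = Seq J1' J2', isSw k l J1' & isSw l k J2']].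
Proof.
elim=> {A a b W}; try by move=> *; discriminate.
- move=> A k0 l0 HA J1 J2 k l EA H1 H2; subst A.
  have := sortU HA (srt_seq (sort_isSw H1) (sort_isSw H2)); case=> ??; subst.
  by rewrite size_nseq; split=> //; exists J1, J2.
- move=> A R Q a0 b0 a b ia ib SA IH1 _ IH2 J1 J2 k l EA H1 H2.
  case: (IH1 J1 J2 k l EA H1 H2) => _ _ [J1' [J2' [ER G1 G2]]]; subst R.
  exact: (IH2 _ _ _ _ erefl G1 G2).
- move=> A R Q a0 b0 a b ia ib SA IH1 _ IH2 J1 J2 k l EA H1 H2.
  case: (IH1 J1 J2 k l EA H1 H2) => Eab Ea [J1' [J2' [ER G1 G2]]]; subst R.
  by case: (IH2 _ _ _ _ erefl G1 G2).
- move=> P Q R S a b c SP _ SR' _ J1 J2 k l [EP ER] H1 H2; subst P R.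
  case: (isSw_step SP H1) => [w1 [w2 [Hw1 Hw2 E1 E2 G1]]].
  case: (isSw_step SR' H2) => [v1 [v2 [Hv1 Hv2 E3 E4 G2]]].
  subst a b c.
  case: (cat_split _ E3) => [|??]; first by rewrite Hw2 Hv1.
  subst v1 v2; rewrite size_cat Hw1 Hw2; split=> //; by exists Q, S.
Qed.

Definition RX {Sigma} k l (A B : term Sigma) :=
  exists J1 J2, [/\ A = Seq J1 J2, isSw k l J1, isSw l k J2 & isI (k + l) B].

Lemma RX_bisim {Sigma} k l : bisimulation (@RX Sigma k l).
Proof.
move=> A B [J1 [J2 [EA H1 H2 HB]]]; split.
- move=> a b A' SA; case: (swsw_fwd SA EA H1 H2) => Eab Ea [J1' [J2' [-> G1 G2]]]; subst b.
  exists (Id_k (k + l)); first exact: isI_go HB Ea.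
  by exists J1', J2'; split=> //; left.
- move=> a b B' SB; case: (isI_step SB HB) => Eab Ea HB'; subst b.
  exists (Seq (Sw k l) (Sw l k)); last by exists (Sw k l), (Sw l k); split=> //; left.
  have Hk : size (take k a) = k by rewrite size_takel // Ea leq_addr.
  have Hl : size (drop k a) = l by rewrite size_drop Ea addKn.
  rewrite EA -{1 2}(cat_take_drop k a).
  exact: (st_cut (isSw_go H1 Hk Hl) (isSw_go H2 Hl Hk)).
Qed.

Unset Implicit Arguments.

Theorem mainTheorem3 (Sigma : Type) (k l m n u v : nat)
  (P Q R S T : term Sigma) :
  closed_sort P (k, l) -> closed_sort Q (l, m) -> closed_sort R (m, n) ->
  closed_sort S (n, u) -> closed_sort T (u, v) ->
  (* (i) *)   bisim (Seq (Seq P Q) R) (Seq P (Seq Q R)) /\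
  (* (ii) *)  (bisim (Seq P (Id_k l)) P /\ bisim P (Seq (Id_k k) P)) /\
  (* (iii) *) bisim (Ten (Ten P R) T) (Ten P (Ten R T)) /\
  (* (iv) *)  bisim (Seq (Ten P S) (Ten Q T)) (Ten (Seq P Q) (Seq S T)) /\
  (* (v) *)   bisim (Seq (Ten P R) (Sw l n)) (Seq (Sw k m) (Ten R P)) /\
  (* (vi) *)  bisim (Seq (@Sw Sigma k l) (Sw l k)) (Id_k (k + l)).
Proof.
move=> HP HQ HR HS HT.
split.
  have H1 : closed_sort (Seq (Seq P Q) R) (k, n) by apply: srt_seq HR; apply: srt_seq HQ.
  split; first by exists (k, n); split=> //; apply: sort_assoc1.
  by exists RA; split; [exact: RA_bisim | exists P, Q, R, (k, n)].
split; [split|].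
  split; first by exists (k, l); split=> //; apply: srt_seq HP (sort_Id l).
  by exists RidR; split; [exact: RidR_bisim | exists P, (Id_k l), k, l; split=> //; left].
  split; first by exists (k, l); split=> //; apply: srt_seq (sort_Id k) HP.
  by exists RidL; split; [exact: RidL_bisim | exists P, (Id_k k), k, l; split=> //; left].
split.
  split; first by exists (k + m + u, l + n + v); split;
    [apply: srt_ten HT; apply: srt_ten | rewrite -!addnA; apply: srt_ten HP _; apply: srt_ten].
  by exists RT; split; [exact: RT_bisim | exists P, R, T].
split.
  split; first by exists (k + n, m + v); split;
    [exact: (srt_seq (srt_ten HP HS) (srt_ten HQ HT)) | exact: (srt_ten (srt_seq HP HQ) (srt_seq HS HT))].
  exists RI; split; [exact: RI_bisim |].
  by exists P, S, Q, T, k, l, m, n, u, v.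
split.
  split; first by exists (k + m, n + l); split;
    [exact: (srt_seq (srt_ten HP HR) (sort_Sw l n)) | exact: (srt_seq (sort_Sw k m) (srt_ten HR HP))].
  exists RS; split; [exact: RS_bisim |].
  by exists P, R, (Sw l n), (Sw k m), k, l, m, n; split=> //; left.
split; first by exists (k + l, k + l); split;
  [exact: (srt_seq (sort_Sw k l) (sort_Sw l k)) | exact: sort_Id].
exists (RX k l); split; [exact: RX_bisim |].
by exists (Sw k l), (Sw l k); split=> //; left.
Qed.
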